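(* Let $q$ be a prime power and let $n,k,r,x$ be integers with $0\le x\le r\le \min(n,k)$. Let $\mathbf{M}$ be a random $n\times k$ matrix over $\mathbb{F}_q$ whose entries are independent and uniformly distributed on $\mathbb{F}_q$, conditioned on the event $\mathrm{rank}(\mathbf{M})=r$. Let $X=\{i\in\{1,\dots,k\}:\mathbf{e}_i\in\mathrm{Row}(\mathbf{M})\}$. Then $$P(|X|=x \mid R=r,\,N=n)=\frac{\binom{k}{x}}{\binom{k}{r}_q}\sum_{j=0}^{k-x}(-1)^j\binom{k-x}{j}\binom{k-x-j}{r-x-j}_q .$$
   Context: $\mathbf{e}_i$ denotes the $i$-th standard unit vector of $\mathbb{F}_q^k$, and $\mathrm{Row}(\mathbf{M})$ is the row space of $\mathbf{M}$. $R$ denotes the rank of $\mathbf{M}$ and $N$ its number of rows. $\binom{m}{d}$ is the ordinary binomial coefficient. $\binom{m}{d}_q$ is the Gaussian binomial coefficient, i.e. the number of $d$-dimensional subspaces of an $m$-dimensional vector space over $\mathbb{F}_q$, $\binom{m}{d}_q=\prod_{i=0}^{d-1}\frac{q^{m}-q^{i}}{q^{d}-q^{i}}$ for $0\le d\le m$. By convention $\binom{m}{d}_q=0$ if $d<0$ or $d>m$. *)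

(* Defs.v *)
From HB Require Import structures.
From mathcomp Require Import all_boot all_order all_algebra all_fingroup all_field.
Set Implicit Arguments. Unset Strict Implicit. Unset Printing Implicit Defensive.
Import Order.TTheory GRing.Theory Num.Theory.
Local Open Scope ring_scope.

Definition qbinom (q : nat) (m d : int) : rat :=
  if (0 <= d) && (d <= m) then
    \prod_(i < `|d|%N)
      ((q%:Q ^+ `|m|%N - q%:Q ^+ i) / (q%:Q ^+ `|d|%N - q%:Q ^+ i))
  else 0.

Definition unitRowSet (F : finFieldType) (n k : nat) (M : 'M[F]_(n, k)) : {set 'I_k} :=
  [set i : 'I_k | ((delta_mx 0 i : 'rV[F]_k) <= M)%MS].

Definition probX (F : finFieldType) (n k r x : nat) : rat :=
  (#|[set M : 'M[F]_(n, k) | (\rank M == r) && (#|unitRowSet M| == x)]|%:R)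
  / (#|[set M : 'M[F]_(n, k) | \rank M == r]|%:R).

(* Main.v *)
Require Import Defs.
From HB Require Import structures.
From mathcomp Require Import all_boot all_order all_algebra all_fingroup all_field.
From mathcomp Require Import ring zify.
Import Order.TTheory GRing.Theory Num.Theory.
Local Open Scope ring_scope.

Set Implicit Arguments. Unset Strict Implicit. Unset Printing Implicit Defensive.
Lemma card_subsp (F : finFieldType) m k (U : 'M[F]_(m,k)) :
  #|[set u : 'rV[F]_k | (u <= U)%MS]| = (#|F| ^ \rank U)%N.
Proof.
have -> : [set u : 'rV[F]_k | (u <= U)%MS] =
   (fun w : 'rV[F]_(\rank U) => w *m row_base U) @: setT.
  apply/setP => u; rewrite inE; apply/idP/imsetP.
    rewrite -(eq_row_base U) => /submxP[w ->]; by exists w.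
  by case=> w _ ->; rewrite -(eq_row_base U) submxMl.
rewrite card_imset; last exact: row_free_inj (row_base_free U).
by rewrite cardsT card_mx mul1n.
Qed.

Lemma rank_col_rV (F : finFieldType) t k (u : 'rV[F]_k) (d : 'M[F]_(t,k)) :
  \rank d = t -> (\rank (col_mx u d) == t.+1) = ~~ (u <= d)%MS.
Proof.
move=> rd.
have e : \rank (col_mx u d) = \rank (u + d)%MS by rewrite -addsmxE.
case sud: (u <= d)%MS => /=.
  have h : (\rank (u + d)%MS <= \rank d)%N by rewrite mxrankS // addsmx_sub sud submx_refl.
  rewrite rd in h; apply/negbTE; rewrite e neq_ltn; apply/orP; left.
  by rewrite ltnS.
have := mxrank_leqif_sup (addsmxSr u d).
move=> [_]; rewrite addsmx_sub sud /= => /negbT; rewrite eq_sym => ne.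
have le1 : (\rank d <= \rank (u + d)%MS)%N by rewrite mxrankS // addsmxSr.
have le2 : (\rank (col_mx u d) <= t.+1)%N := rank_leq_row _.
rewrite e in le2 *; rewrite rd in le1 ne.
by rewrite eqn_leq le2 /= ltn_neqAle eq_sym ne le1.
Qed.

Lemma count_indep (F : finFieldType) m k (U : 'M[F]_(m,k)) t :
  (\sum_(B : 'M[F]_(t,k)) ((\rank B == t) && (B <= U)%MS : nat) =
   \prod_(i < t) (#|F| ^ \rank U - #|F| ^ i))%N.
Proof.
elim: t => [|t IH].
  rewrite big_ord0 (eq_bigr (fun _ => 1%N)); last first.
    move=> B _; rewrite flatmx0 mxrank0 sub0mx //.
  by rewrite sum1_card card_mx.
rewrite (reindex (fun p : 'rV[F]_k * 'M[F]_(t,k) => (col_mx p.1 p.2 : 'M_(t.+1,k)))) /=; last first.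
  exists (fun B : 'M[F]_(t.+1,k) => (usubmx (B : 'M_(1+t,k)), dsubmx (B : 'M_(1+t,k)))).
    by case=> u d _ /=; rewrite col_mxKu col_mxKd.
  by move=> B _ /=; rewrite vsubmxK.
rewrite -(pair_big xpredT xpredT (fun (u : 'rV[F]_k) (d : 'M[F]_(t,k)) => ((\rank (col_mx u d : 'M_(t.+1,k)) == t.+1) && (col_mx u d <= U)%MS : nat))) /=.
rewrite exchange_big /= big_ord_recr /= -IH big_distrl /=.
apply: eq_bigr => d _.
case rd: (\rank d == t); last first.
  rewrite /= mul0n big1 // => u _.
  have h1 : (\rank (col_mx u d) <= 1 + \rank d)%N.
    rewrite -addsmxE; apply: leq_trans (mxrank_adds_leqif u d) _.
    by rewrite leq_add2r rank_leq_row.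
  have h2 : (\rank d < t)%N by rewrite ltn_neqAle rd rank_leq_row.
  case e: (\rank (col_mx u d) == t.+1) => //=; move/eqP: e => e.
  have h3 : (\rank (col_mx u d) != t.+1)%N.
    by rewrite neq_ltn; apply/orP; left; apply: leq_ltn_trans h1 _; rewrite add1n ltnS.
  by case/negP: h3; apply/eqP.

case sdU: (d <= U)%MS; last first.
  rewrite /= mul0n big1 // => u _.
  by rewrite col_mx_sub sdU andbF andbF.
move/eqP: rd => rd.
rewrite /= mul1n (eq_bigr (fun u => (~~ (u <= d)%MS && (u <= U)%MS : nat))); last first.
  by move=> u _; rewrite rank_col_rV // col_mx_sub sdU andbT.
have -> : (\sum_(u : 'rV[F]_k) (~~ (u <= d)%MS && (u <= U)%MS : nat))%N =
   #|[set u : 'rV[F]_k | (u <= U)%MS] :\: [set u : 'rV[F]_k | (u <= d)%MS]|.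
  rewrite -sum1_card [RHS]big_mkcond /=; apply: eq_bigr => u _.
  by rewrite !inE; case: (u <= d)%MS; case: (u <= U)%MS.
rewrite cardsD (setIidPr _); last first.
  by apply/subsetP => u; rewrite !inE => h; apply: submx_trans h sdU.
by rewrite !card_subsp rd.
Qed.

Definition gcount (F : finFieldType) n k r t (B : 'M[F]_(t,k)) : nat :=
  (\sum_(M : 'M[F]_(n,k)) ((\rank M == r) && (B <= M)%MS : nat))%N.

Lemma sub_pid (F : finFieldType) t k m (B : 'M[F]_(t,k)) (M : 'M[F]_(m,k)) :
  \rank B = t -> (B <= M)%MS = ((pid_mx t : 'M_(t,k)) *m row_ebase B <= M)%MS.
Proof.
move=> rB; transitivity (row_base B <= M)%MS; first by rewrite eq_row_base.
by rewrite /row_base rB.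
Qed.

Lemma gcount_sym (F : finFieldType) n k r t (B B' : 'M[F]_(t,k)) :
  \rank B = t -> \rank B' = t -> gcount n r B = gcount n r B'.
Proof.
move=> rB rB'; rewrite /gcount.
set E := row_ebase B; set E' := row_ebase B'.
have uE : E \in unitmx by apply: row_ebase_unit.
have uE' : E' \in unitmx by apply: row_ebase_unit.
set P := invmx E *m E'.
have uP : P \in unitmx by rewrite unitmx_mul unitmx_inv uE uE'.
have fP : row_free P by rewrite row_free_unit.
rewrite [RHS](reindex_inj (row_free_inj fP)) /=.
apply: eq_bigr => M _.
rewrite mxrankMfree // (sub_pid _ rB) (sub_pid _ rB') -/E -/E'.
have -> : (pid_mx t : 'M_(t,k)) *m E' = ((pid_mx t : 'M_(t,k)) *m E) *m P.
  by rewrite /P mulmxA -(mulmxA _ E) mulmxV // mulmx1.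
by rewrite submxMfree.
Qed.

Lemma gcount_core (F : finFieldType) n k r t (B : 'M[F]_(t,k)) :
  \rank B = t ->
  (gcount n r B * \prod_(i < t) (#|F| ^ k - #|F| ^ i) =
   (\sum_(M : 'M[F]_(n,k)) (\rank M == r : nat)) * \prod_(i < t) (#|F| ^ r - #|F| ^ i))%N.
Proof.
move=> rB.
have S1 : (\sum_(M : 'M[F]_(n,k)) \sum_(B' : 'M[F]_(t,k))
      ((\rank M == r) * ((\rank B' == t) && (B' <= M)%MS)) =
   (\sum_(M : 'M[F]_(n,k)) (\rank M == r : nat)) * \prod_(i < t) (#|F| ^ r - #|F| ^ i))%N.
  rewrite big_distrl /=; apply: eq_bigr => M _.
  rewrite -big_distrr /= count_indep.
  by case: eqP => [->|] //; rewrite !mul0n.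
rewrite -S1 exchange_big /=.
rewrite (eq_bigr (fun B' : 'M[F]_(t,k) => ((\rank B' == t) && (B' <= (1%:M : 'M[F]_k))%MS) * gcount n r B))%N; last first.
  move=> B' _; rewrite submx1 andbT /gcount big_distrr /=.
  case rB': (\rank B' == t); last by rewrite !big1 // => M _; rewrite /= ?muln0.
  transitivity (gcount n r B').
    by rewrite /gcount; apply: eq_bigr => M _; case: (\rank M == r); case: (B' <= M)%MS.
  rewrite -(gcount_sym n r rB (eqP rB')) /gcount; apply: eq_bigr => M _.
  by rewrite mul1n.
by rewrite -big_distrl /= count_indep mxrank1 mulnC.
Qed.

Lemma qdiff_nat (q a b : nat) : (0 < q)%N -> (b <= a)%N ->
  q%:Q ^+ a - q%:Q ^+ b = ((q ^ a - q ^ b)%N)%:R.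
Proof. by move=> q0 ba; rewrite natrB ?natrX // leq_pexp2l. Qed.

Lemma qdiff_neq0 (q a b : nat) : (1 < q)%N -> (b < a)%N -> q%:Q ^+ a - q%:Q ^+ b != 0.
Proof.
move=> q1 ba; rewrite qdiff_nat ?(ltnW q1) ?(ltnW ba) // pnatr_eq0 -lt0n subn_gt0.
by rewrite ltn_exp2l.
Qed.

Lemma qbinom_nat (q m d : nat) : (d <= m)%N ->
  qbinom q m%:Z d%:Z = \prod_(i < d) ((q%:Q ^+ m - q%:Q ^+ i) / (q%:Q ^+ d - q%:Q ^+ i)).
Proof. by move=> dm; rewrite /qbinom lez_nat dm. Qed.

Lemma qbinom_neg (q : nat) (m d : int) : d < 0 -> qbinom q m d = 0.
Proof. by move=> d0; rewrite /qbinom leNgt d0. Qed.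

Lemma qbinom_neq0 (q m d : nat) : (1 < q)%N -> (d <= m)%N -> qbinom q m%:Z d%:Z != 0.
Proof.
move=> q1 dm; rewrite qbinom_nat //; apply/prodf_neq0 => i _.
rewrite mulf_neq0 ?invr_eq0 ?qdiff_neq0 //; exact: leq_trans (ltn_ord i) dm.
Qed.

Lemma hq (q k r t : nat) : (1 < q)%N -> (t <= k)%N -> (r <= k)%N ->
  qbinom q k%:Z r%:Z * (((\prod_(i < t) (q ^ r - q ^ i))%N)%:R /
                         ((\prod_(i < t) (q ^ k - q ^ i))%N)%:R)
  = qbinom q (k - t)%:Z (r%:Z - t%:Z).
Proof.
move=> q1 tk rk.
case: (ltnP r t) => [rt|tr].
  rewrite [RHS]qbinom_neg; last by rewrite subr_lt0 ltz_nat.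
  by rewrite (bigD1 (Ordinal rt)) //= subnn mul0n mul0r mulr0.
rewrite subzn // qbinom_nat // qbinom_nat; last exact: leq_sub2r.
have q0 : (0 < q)%N by apply: ltnW.
rewrite !natr_prod.
rewrite (eq_bigr (fun i : 'I_t => q%:Q ^+ r - q%:Q ^+ i)); last first.
  move=> i _; rewrite qdiff_nat //; apply: ltnW; exact: leq_trans (ltn_ord i) tr.
rewrite [X in _ / X](eq_bigr (fun i : 'I_t => q%:Q ^+ k - q%:Q ^+ i)); last first.
  move=> i _; rewrite qdiff_nat //; apply: ltnW; apply: leq_trans (ltn_ord i) tk.
set G := fun i : nat => (q%:Q ^+ k - q%:Q ^+ i) / (q%:Q ^+ r - q%:Q ^+ i).
have -> : \prod_(i < r) ((q%:Q ^+ k - q%:Q ^+ i) / (q%:Q ^+ r - q%:Q ^+ i))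
   = (\prod_(i < t) G i) * \prod_(i < r - t) G (i + t)%N.
  rewrite -(big_mkord xpredT (fun i => G i)) -(big_mkord xpredT (fun i => G i)) -(big_mkord xpredT (fun i => G (i + t)%N)).
  rewrite (@big_cat_nat _ _ _ t 0 r _ _ (leq0n t) tr) /=.
  by rewrite -{2}(add0n t) big_addn.
rewrite /G prodf_div.
set Nr := \prod_(i < t) (q%:Q ^+ r - q%:Q ^+ i).
set Dr := \prod_(i < t) (q%:Q ^+ k - q%:Q ^+ i).
have Nr0 : Nr != 0.
  apply/prodf_neq0 => i _; apply: qdiff_neq0 => //; exact: leq_trans (ltn_ord i) tr.
have Dr0 : Dr != 0.
  apply/prodf_neq0 => i _; apply: qdiff_neq0 => //; exact: leq_trans (ltn_ord i) tk.
rewrite mulrAC mulf_div [Nr * Dr]mulrC divff ?mulf_neq0 // mul1r.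
apply: eq_bigr => i _.
have qt0 : q%:Q ^+ t != 0 by rewrite expf_neq0 // pnatr_eq0 -lt0n.
have -> : q%:Q ^+ k - q%:Q ^+ (i + t)%N = q%:Q ^+ t * (q%:Q ^+ (k - t) - q%:Q ^+ i).
  by rewrite mulrBr -!exprD subnKC // addnC.
have -> : q%:Q ^+ r - q%:Q ^+ (i + t)%N = q%:Q ^+ t * (q%:Q ^+ (r - t) - q%:Q ^+ i).
  by rewrite mulrBr -!exprD subnKC // addnC.
by rewrite -mulf_div divff // mul1r.
Qed.

Lemma bin_mul (m t x : nat) : (x <= t)%N -> (t <= m)%N ->
  ('C(m, t) * 'C(t, x) = 'C(m, x) * 'C(m - x, t - x))%N.
Proof.
move=> xt tm.
have pos : (0 < x`! * (t - x)`! * (m - t)`!)%N by rewrite !muln_gt0 !fact_gt0.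
apply/eqP; rewrite -(eqn_pmul2r pos); apply/eqP.
have e1 : ('C(m, t) * 'C(t, x) * (x`! * (t - x)`! * (m - t)`!) =
          'C(m, t) * ('C(t, x) * (x`! * (t - x)`!)) * (m - t)`!)%N by ring.
rewrite e1 bin_fact // -mulnA -[in X in X = _](subnKC tm).
have e3 : (m - x - (t - x) = m - t)%N by lia.
have e2 : ('C(m, x) * 'C(m - x, t - x) * (x`! * (t - x)`! * (m - t)`!) =
          'C(m, x) * x`! * ('C(m - x, t - x) * ((t - x)`! * (m - x - (t - x))`!)))%N.
  rewrite e3; ring.
rewrite e2 bin_fact; last by lia.
rewrite -mulnA bin_fact; last by lia.
by rewrite bin_fact ?subnKC //; apply: leq_trans tm.
Qed.

Lemma altsum (n : nat) :
  \sum_(j < n.+1) (-1) ^+ j * ('C(n, j))%:R = (n == 0%N)%:R :> rat.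
Proof.
have := exprBn (1 : rat) 1 n; rewrite subrr expr0n => ->.
by apply: eq_bigr => j _; rewrite !expr1n !mulr1 mulr_natr.
Qed.

Lemma reidx (m x : nat) (f : nat -> rat) : (x <= m)%N ->
  \sum_(t < m.+1) ('C(m, t))%:R * ((-1) ^+ (t - x) * ('C(t, x))%:R) * f t =
  ('C(m, x))%:R * \sum_(j < (m - x).+1) (-1) ^+ j * ('C(m - x, j))%:R * f (x + j)%N.
Proof.
move=> xm.
rewrite -[LHS](big_mkord xpredT (fun t => ('C(m, t))%:R * ((-1) ^+ (t - x) * ('C(t, x))%:R) * f t)) (@big_cat_nat _ _ _ x 0 m.+1) //=; last by apply: leq_trans xm _.
rewrite big_nat big1 ?add0r; last first.
  by move=> t /andP[_ tx]; rewrite (bin_small tx) mulr0 mulr0 mul0r.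
rewrite -{1}(add0n x) big_addn subSn // big_mkord big_distrr /=.
apply: eq_bigr => j _.
have jm : (j + x <= m)%N by have := ltn_ord j; lia.
rewrite addnK (addnC x j).
have := bin_mul (leq_addl j x) jm; rewrite addnK => e.
have e' : ('C(m, j + x))%:R * ('C(j + x, x))%:R = ('C(m, x))%:R * ('C(m - x, j))%:R :> rat.
  by rewrite -!natrM e.
transitivity ((('C(m, j + x))%:R * ('C(j + x, x))%:R) * ((-1) ^+ j * f (j + x)%N) : rat).
  ring.
by rewrite e'; ring.
Qed.

Lemma group_size (k : nat) (S : {set 'I_k}) (f : nat -> rat) :
  \sum_(T : {set 'I_k} | T \subset S) f #|T| =
  \sum_(t < k.+1) ('C(#|S|, t))%:R * f t.
Proof.
rewrite (partition_big (fun T : {set 'I_k} => inord #|T| : 'I_k.+1) xpredT) //=.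
apply: eq_bigr => t _.
have cT : forall T : {set 'I_k}, (#|T| < k.+1)%N.
  by move=> T; rewrite ltnS; apply: leq_trans (max_card _) _; rewrite card_ord.
rewrite (eq_bigr (fun _ => f t)); last first.
  move=> T /andP[_ e]; have e2 : inord #|T| = t := eqP e.
  by rewrite -e2 inordK.
rewrite (eq_bigl (fun T => T \in [set T : {set 'I_k} | T \subset S & #|T| == t])); last first.
  move=> T; rewrite !inE; congr (_ && _).
  apply/eqP/eqP => e.
    by rewrite -e inordK.
  by apply: val_inj; rewrite /= inordK // e.
by rewrite sumr_const cards_draws mulr_natl.
Qed.

Lemma shrink (k s : nat) (F : nat -> rat) : (s <= k)%N ->
  \sum_(t < k.+1) ('C(s, t))%:R * F t = \sum_(t < s.+1) ('C(s, t))%:R * F t.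
Proof.
move=> sk.
rewrite [RHS](big_ord_widen k.+1 (fun t => ('C(s, t))%:R * F t)) // [RHS]big_mkcond /=.
apply: eq_bigr => t _; case: ifP => // /negbT; rewrite -leqNgt => st.
by rewrite bin_small // mul0r.
Qed.

Lemma incl_excl (k x : nat) (S : {set 'I_k}) :
  \sum_(T : {set 'I_k} | T \subset S) ((-1) ^+ (#|T| - x) * ('C(#|T|, x))%:R)
  = (#|S| == x)%:R :> rat.
Proof.
rewrite (group_size S (fun t => (-1) ^+ (t - x) * ('C(t, x))%:R)).
have sk : (#|S| <= k)%N by apply: leq_trans (max_card _) _; rewrite card_ord.
case: (leqP x #|S|) => [xs|sx].
  rewrite (shrink (fun t => (-1) ^+ (t - x) * ('C(t, x))%:R) sk).
  have := reidx (fun _ => 1) xs.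
  rewrite (eq_bigr (fun t : 'I_#|S|.+1 => ('C(#|S|, t))%:R * ((-1) ^+ (t - x) * ('C(t, x))%:R))); last first.
    by move=> t _; rewrite mulr1.
  move=> ->.
  rewrite (eq_bigr (fun j : 'I_(#|S| - x).+1 => (-1) ^+ j * ('C(#|S| - x, j))%:R)); last first.
    by move=> j _; rewrite mulr1.
  rewrite altsum subn_eq0.
  case: (eqVneq #|S| x) => [->|nsx]; first by rewrite leqnn binn mulr1.
  have -> : (#|S| <= x)%N = false by apply/negbTE; rewrite -ltnNge ltn_neqAle eq_sym nsx xs.
  by rewrite mulr0.
rewrite big1; first by rewrite (ltn_eqF sx).
move=> t _; case: (leqP t #|S|) => ts.
  by rewrite (bin_small (leq_ltn_trans ts sx)) !mulr0.
by rewrite bin_small // mul0r.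
Qed.

Definition umx (F : finFieldType) k (T : {set 'I_k}) : 'M[F]_(#|T|, k) :=
  \matrix_(i < #|T|, j < k) ((enum_val i == j)%:R).

Lemma row_umx (F : finFieldType) k (T : {set 'I_k}) i :
  row i (umx F T) = delta_mx 0 (enum_val i).
Proof. by apply/rowP => j; rewrite !mxE eqxx /= eq_sym. Qed.

Lemma rank_umx (F : finFieldType) k (T : {set 'I_k}) : \rank (umx F T) = #|T|.
Proof.
apply/eqP; rewrite eqn_leq rank_leq_row /=.
have e : umx F T *m (umx F T)^T = 1%:M.
  apply/matrixP => i i'; rewrite !mxE.
  rewrite (bigD1 (enum_val i)) //= big1 => [|j nj]; last first.
    by rewrite !mxE eq_sym (negbTE nj) mul0r.
  rewrite !mxE eqxx mul1r addr0 (inj_eq enum_val_inj) eq_sym.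
  done.
have := mxrankM_maxl (umx F T) (umx F T)^T.
by rewrite e mxrank1.
Qed.

Lemma sub_umx (F : finFieldType) n k (T : {set 'I_k}) (M : 'M[F]_(n, k)) :
  (umx F T <= M)%MS = (T \subset unitRowSet M).
Proof.
apply/row_subP/subsetP => h.
  move=> a aT; rewrite inE.
  by have := h (enum_rank_in aT a); rewrite row_umx enum_rankK_in.
by move=> i; rewrite row_umx; have := h _ (enum_valP i); rewrite inE.
Qed.

Lemma card_set_sum (T : finType) (P : pred T) :
  #|[set x | P x]| = (\sum_(x : T) (P x : nat))%N.
Proof.
rewrite -sum1_card big_mkcond /=; apply: eq_bigr => x _; rewrite inE.
by case: (P x).
Qed.

Unset Implicit Arguments.
Theorem theorem1 (F : finFieldType) (q n k r x : nat) :
  q = #|F| -> (x <= r)%N -> (r <= minn n k)%N ->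
  probX F n k r x =
    ('C(k, x)%:R / qbinom q k r) *
    \sum_(j < (k - x).+1)
      (-1) ^+ j * 'C(k - x, j)%:R
        * qbinom q ((k - x)%:Z - j%:Z) (r%:Z - x%:Z - j%:Z).
Proof.
move=> qF xr; rewrite leq_min => /andP[rn rk].
have q1 : (1 < q)%N by rewrite qF; apply: card_finNzRing_gt1.
have xk : (x <= k)%N by apply: leq_trans xr rk.
set A := (\sum_(M : 'M[F]_(n, k)) (\rank M == r : nat))%N.
have A0 : A%:R != 0 :> rat.
  by rewrite pnatr_eq0 /A (bigD1 (pid_mx r)) //= rank_pid_mx // eqxx.
set h := fun t : nat => (((\prod_(i < t) (q ^ r - q ^ i))%N)%:R /
                         ((\prod_(i < t) (q ^ k - q ^ i))%N)%:R : rat).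
set c := fun t : nat => ((-1) ^+ (t - x) * ('C(t, x))%:R : rat).
have hg : forall T : {set 'I_k},
    (gcount n r (umx F T))%:R = A%:R * h #|T| :> rat.
  move=> T; have := gcount_core n r (rank_umx F T); rewrite -qF => e.
  have D0 : ((\prod_(i < #|T|) (q ^ k - q ^ i))%N)%:R != 0 :> rat.
    rewrite natr_prod; apply/prodf_neq0 => i _.
    rewrite -qdiff_nat; first (apply: qdiff_neq0 => //).
    - apply: leq_trans (ltn_ord i) _; apply: leq_trans (max_card _) _; by rewrite card_ord.
    - exact: ltnW.
    - apply: ltnW; apply: leq_trans (ltn_ord i) _.
      apply: leq_trans (max_card _) _; by rewrite card_ord.
  rewrite /h mulrA; apply: (canRL (mulfK D0)); by rewrite -!natrM e.
have num : (#|[set M : 'M[F]_(n, k) | (\rank M == r) && (#|unitRowSet M| == x)]|)%:R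
    = A%:R * \sum_(t < k.+1) ('C(k, t))%:R * c t * h t :> rat.
  rewrite card_set_sum natr_sum.
  transitivity (\sum_(M : 'M[F]_(n, k)) \sum_(T : {set 'I_k})
      ((T \subset unitRowSet M)%:R * (\rank M == r)%:R * c #|T| : rat)).
    apply: eq_bigr => M _.
    have -> : (((\rank M == r) && (#|unitRowSet M| == x)) : nat)%:R
        = (\rank M == r)%:R * (#|unitRowSet M| == x)%:R :> rat.
      by case: (\rank M == r); case: (#|unitRowSet M| == x); rewrite ?mul1r ?mul0r.
    rewrite -(incl_excl x (unitRowSet M)) big_distrr /= big_mkcond /=.
    apply: eq_bigr => T _; case: (T \subset unitRowSet M); rewrite ?mul1r ?mul0r ?mulr0 //.
  rewrite exchange_big /=.
  transitivity (\sum_(T : {set 'I_k} | T \subset setT) A%:R * (c #|T| * h #|T|)).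
    rewrite [RHS](eq_bigl xpredT); last by move=> T; rewrite subsetT.
    apply: eq_bigr => T _.
    transitivity ((gcount n r (umx F T))%:R * c #|T|); last by rewrite hg; ring.
    rewrite -mulr_suml /gcount natr_sum; congr (_ * _); apply: eq_bigr => M _.
    rewrite sub_umx.
    by case: (\rank M == r); case: (T \subset unitRowSet M); rewrite ?mul1r ?mul0r.
  rewrite -big_distrr /= (group_size setT (fun t => c t * h t)) cardsT card_ord.
  by congr (_ * _); apply: eq_bigr => t _; rewrite mulrA.
rewrite /probX.
set N := (X in X / _).
have -> : N = A%:R * \sum_(t < k.+1) ('C(k, t))%:R * c t * h t by exact: num.
rewrite card_set_sum -/A mulrC mulKf //.
rewrite /c (reidx h xk).
rewrite -mulrA; congr (_ * _).
have qb0 : qbinom q k r != 0 by apply: qbinom_neq0.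
rewrite big_distrr /=; apply: eq_bigr => j _.
have jk : (x + j <= k)%N by have := ltn_ord j; rewrite ltnS leq_subRL.
have -> : h (x + j)%N = qbinom q (k - (x + j))%:Z (r%:Z - (x + j)%:Z) / qbinom q k r.
  by rewrite -(hq q1 jk rk) [qbinom q k r * _]mulrC mulfK.
have -> : (k - x)%:Z - j%:Z = (k - (x + j))%:Z.
  by rewrite subzn ?subnDA // leq_subRL // addnC.
have -> : r%:Z - x%:Z - j%:Z = r%:Z - (x + j)%:Z by rewrite PoszD opprD addrA.
by rewrite mulrA mulrC.
Qed.
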